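(* Let $b(\lambda)=\frac14\lambda^4+\frac12p\lambda^2+q\lambda$ with $p<0$, $q\in\mathbb{R}$, let $b^*(\eta)=\sup_{\lambda}[\eta\lambda-b(\lambda)]$, and $A(x,r,\eta)=b(x)+b(r)-\eta(x+r)+2b^*(\eta)$. Fix $x$ with $|x|>\sqrt{-p}$ and let $\eta_0=x^3+px+q$ (the unique $\eta$ at which $\lambda\mapsto\eta\lambda-b(\lambda)$ attains its global maximum at $\lambda=x$). Then for all $\eta\in\mathbb{R}$, $$A(x,x,\eta)\approx(\eta-\eta_0)^2(1+|\eta|)^{-2/3},$$ with implied constants independent of $\eta$.
   Context: $X\approx Y$ means $cY\le X\le c^{-1}Y$ for some $c>0$ independent of $\eta$ (it may depend on $x,p,q$). *)

(* Defs.v *)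
From mathcomp Require Import all_boot all_order all_algebra.
From mathcomp Require Import all_classical all_reals all_analysis.
Set Implicit Arguments. Unset Strict Implicit. Unset Printing Implicit Defensive.
Import Order.TTheory GRing.Theory Num.Theory.
Local Open Scope classical_set_scope.
Local Open Scope ring_scope.

Definition bfun (R : realType) (p q l : R) : R :=
  l ^+ 4 / 4%:R + p * l ^+ 2 / 2%:R + q * l.

Definition bstar (R : realType) (p q eta : R) : R :=
  sup (range (fun l : R => eta * l - bfun p q l)).

Definition Afun (R : realType) (p q x r eta : R) : R :=
  bfun p q x + bfun p q r - eta * (x + r) + 2%:R * bstar p q eta.

(* Main.v *)
Require Import Defs.
From mathcomp Require Import all_boot all_order all_algebra.
From mathcomp Require Import all_classical all_reals all_analysis.
From mathcomp Require Import ring lra.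
Import Order.TTheory GRing.Theory Num.Theory.
Local Open Scope ring_scope.

Lemma keyid (R : realType) (p q x eta l : R) : eta* l - bfun p q l =
  (eta*x - bfun p q x) + (eta - (x^+3+p*x+q))*(l-x)
  - (l-x)^+2*(((l-x)/2%:R + x)^+2 + (x^+2+p)/2%:R).
Proof. rewrite /bfun. by field. Qed.

Lemma wid (R : realType) (A : R) : 0 < A ->
  (A `^ (- (2%:R / 3%:R))) ^+ 3 * A ^+ 2 = 1.
Proof.
move=> A0.
rewrite -powR_mulrn ?powR_ge0 // -powRrM.
have -> : - (2%:R / 3%:R) * 3%:R = - (2%:R : R) by field.
rewrite powR_invn ?ltW // mulVf // expf_neq0 // gt_eqF //.
Qed.

Lemma contra (R : realFieldType) (a b C d h w eta eta0 : R) :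
  0 < a -> 0 < b -> 0 <= w -> w^+3 * (1+`|eta|)^+2 = 1 -> d = eta - eta0 ->
  4%:R * (1+`|eta0|)^+2 <= (a*C)^+3 -> 4%:R <= b * C^+3 -> 0 <= C ->
  d* h - (a* h^+2 + b* h^+4) <= C*d^+2*w.
Proof.
move=> a0 b0 w0 hw hd h1 h2 C0.
rewrite leNgt; apply/negP => H.
have cdw : 0 <= C*d^+2*w by apply: mulr_ge0 => //; apply: mulr_ge0 => //; apply: sqr_ge0.
have ah : 0 <= a* h^+2 by apply: mulr_ge0 => //; [exact: ltW | exact: sqr_ge0].
have bh : 0 <= b* h^+4 by apply: mulr_ge0 => //; [exact: ltW | exact: exprn_even_ge0].
have i1 : C*d^+2*w < d* h by lra.
have i2 : a* h^+2 < d* h by lra.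
have i3 : b* h^+4 < d* h by lra.
have dh0 : 0 < d* h by lra.
have p1 : (C*d^+2*w)*(a* h^+2) < (d* h)*(d* h) by apply: ltr_pM.
have e1 : a*C*w < 1.
  have : (d* h)^+2 * (a*C*w) < (d* h)^+2 * 1 by nra.
  by rewrite ltr_pM2l // exprn_gt0.
have p3 : (C*d^+2*w)^+3 < (d* h)^+3 by rewrite ltrXn2r // ?ltW.
have p4 : (C*d^+2*w)^+3*(b* h^+4) < (d* h)^+3*(d* h) by apply: ltr_pM => //; apply: exprn_ge0.
have e2 : b*C^+3*d^+2*w^+3 < 1.
  have : (d* h)^+4 * (b*C^+3*d^+2*w^+3) < (d* h)^+4 * 1 by nra.
  by rewrite ltr_pM2l // exprn_gt0.
have aCw0 : 0 <= a*C*w by apply: mulr_ge0 => //; apply: mulr_ge0 => //; apply: ltW.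
have e1' : (a*C*w)^+3 < 1 by rewrite -(expr1n R 3) ltrXn2r.
have Xp : 0 < (1+`|eta|)^+2 by rewrite exprn_gt0 // ltr_wpDr.
have e1'' : (a*C)^+3 < (1+`|eta|)^+2.
  have eq : (a*C)^+3 * (w^+3 * (1+`|eta|)^+2) = (a*C*w)^+3 * (1+`|eta|)^+2 by rewrite mulrA -exprMn.
  have : (a*C)^+3 * (w^+3 * (1+`|eta|)^+2) < (1+`|eta|)^+2 by rewrite eq; nra.
  by rewrite hw mulr1.
have e2' : b*C^+3*d^+2 < (1+`|eta|)^+2.
  have : b*C^+3*d^+2 * (w^+3 * (1+`|eta|)^+2) < (1+`|eta|)^+2 by rewrite mulrA; nra.
  by rewrite hw mulr1.
have tri : `|eta| <= `|d| + `|eta0|.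
  have -> : eta = d + eta0 by rewrite hd; lra.
  exact: ler_normD.
have n0 : 0 <= `|eta0| by [].
have ne : 0 <= `|eta| by [].
have nd : 0 <= `|d| by [].
have d2 : `|d|^+2 = d^+2 by rewrite real_normK // num_real.
case: (leP `|d| (1+`|eta0|)) => hdE.
- have : (1+`|eta|)^+2 <= 4%:R * (1+`|eta0|)^+2.
    have : 1+`|eta| <= 2%:R*(1+`|eta0|) by lra.
    move=> hh; have : (1+`|eta|)^+2 <= (2%:R*(1+`|eta0|))^+2 by apply: lerXn2r; rewrite ?nnegrE; lra.
    by rewrite exprMn; lra.
  lra.
- have : (1+`|eta|)^+2 <= 4%:R * d^+2.
    have : 1+`|eta| <= 2%:R* `|d| by lra.
    move=> hh; have : (1+`|eta|)^+2 <= (2%:R* `|d|)^+2 by apply: lerXn2r; rewrite ?nnegrE; lra.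
    by rewrite exprMn d2; lra.
  move=> hh.
  have : 4%:R * d^+2 <= b*C^+3*d^+2 by nra.
  lra.
Qed.

Lemma Qlow (R : realFieldType) (x m h : R) : 0 < m -> 2%:R * m < x^+2 ->
  (m/2%:R) * h^+2 + (m/(16%:R*x^+2)) * h^+4 <= h^+2 * ((h/2%:R + x)^+2 + m).
Proof.
move=> m0 mx.
have x2 : 0 < x^+2 by lra.
set th := m/(16%:R*x^+2).
have th0 : 0 <= th by rewrite /th divr_ge0 // ?ltW // mulr_gt0.
have thx : th * (16%:R * x^+2) = m by rewrite /th mulfVK // gt_eqF // mulr_gt0.
have sq : h^+2 / 8%:R - x^+2 <= (h/2%:R + x)^+2.
  have e : h = 2%:R * (h/2%:R + x) - 2%:R * x by field.
  set u := h/2%:R + x in e *; rewrite e; have := sqr_ge0 (u + x); nra.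
have th1 : th * (16%:R * x^+2) <= x^+2 by lra.
have key : th * h^+2 - m/2%:R <= (h/2%:R + x)^+2.
  have : th * (16%:R*x^+2) * (h^+2 / 8%:R - x^+2) <= x^+2 * (h/2%:R + x)^+2.
    have : (h/2%:R + x)^+2 * (th * (16%:R * x^+2)) <= (h/2%:R + x)^+2 * x^+2.
      by apply: ler_wpM2l => //; exact: sqr_ge0.
    nra.
  rewrite thx => H.
  have : x^+2 * (th * h^+2 - m/2%:R) <= x^+2 * (h/2%:R + x)^+2.
    have -> : x^+2 * (th * h^+2 - m/2%:R) = m * (h^+2 / 8%:R - x^+2) / 2%:R * 1 + m*x^+2 - m*x^+2 + 0 by rewrite -thx; field.
    have := mulr_ge0 (ltW x2) (sqr_ge0 (h/2%:R + x)); lra.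
  by rewrite ler_pM2l.
have h2 : 0 <= h^+2 by exact: sqr_ge0.
have : h^+2 * (th * h^+2 - m/2%:R + m) <= h^+2 * ((h/2%:R + x)^+2 + m).
  by apply: ler_wpM2l => //; lra.
have -> : h^+4 = h^+2 * h^+2 by rewrite -exprD.
nra.
Qed.

Lemma Qup (R : realFieldType) (x m h : R) :
  h^+2 * ((h/2%:R + x)^+2 + m) <= (2%:R*x^+2 + m) * h^+2 + h^+4 / 2%:R.
Proof.
have : (h/2%:R + x)^+2 <= h^+2/2%:R + 2%:R * x^+2.
  have : 0 <= (h/2%:R - x)^+2 by exact: sqr_ge0.
  move=> H; have e : (h/2%:R + x)^+2 + (h/2%:R - x)^+2 = h^+2/2%:R + 2%:R * x^+2 by field.
  lra.
move=> H.
have h2 : 0 <= h^+2 by exact: sqr_ge0.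
have : h^+2 * ((h/2%:R + x)^+2 + m) <= h^+2 * (h^+2/2%:R + 2%:R * x^+2 + m).
  by apply: ler_wpM2l => //; lra.
have -> : h^+4 = h^+2 * h^+2 by rewrite -exprD.
nra.
Qed.

Lemma lowalg (R : realFieldType) (al E d w s : R) : 0 <= al -> 0 <= w -> w <= 1 ->
  d^+2 * w^+3 <= E^+2 -> s = (1 + 4%:R*al + 2%:R*E^+2)^-1 ->
  (s/2%:R) * (d^+2 * w) <= d * (s*d*w) - (al * (s*d*w)^+2 + (s*d*w)^+4/2%:R).
Proof.
move=> al0 w0 w1 dw hs.
have K0 : 0 < 1 + 4%:R*al + 2%:R*E^+2 by have := sqr_ge0 E; lra.
have s0 : 0 < s by rewrite hs invr_gt0.
have sK : s * (1 + 4%:R*al + 2%:R*E^+2) = 1 by rewrite hs mulVf // gt_eqF.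
have s1 : s <= 1 by have := sqr_ge0 E; nra.
have sa : 4%:R * al * s <= 1 by have := sqr_ge0 E; nra.
have sE : 2%:R * E^+2 * s <= 1 by nra.
have D0 : 0 <= d^+2 by exact: sqr_ge0.
have t1 : al * (s*d*w)^+2 <= (s/4%:R) * (d^+2 * w).
  have -> : al * (s*d*w)^+2 = (al * s * w) * (s * (d^+2 * w)) by rewrite !exprMn; ring.
  have : al * s * w <= 1/4%:R by nra.
  have : 0 <= s * (d^+2 * w) by apply: mulr_ge0; [lra| apply: mulr_ge0].
  nra.
have t2 : (s*d*w)^+4/2%:R <= (s/4%:R) * (d^+2 * w).
  have -> : (s*d*w)^+4/2%:R = (s^+3 * (d^+2 * w^+3) / 2%:R) * (s * (d^+2 * w)) by rewrite !exprMn; field.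
  have s3 : s^+3 <= s by have := mulr_ge0 (ltW s0) (ltW s0); nra.
  have : s^+3 * (d^+2 * w^+3) <= s * E^+2.
    have : 0 <= d^+2 * w^+3 by apply: mulr_ge0 => //; exact: (exprn_ge0 _ w0).
    have : 0 <= s^+3 by exact: (exprn_ge0 _ (ltW s0)).
    nra.
  have : 0 <= s * (d^+2 * w) by apply: mulr_ge0; [lra| apply: mulr_ge0].
  nra.
have -> : d * (s*d*w) = s * (d^+2 * w) by ring.
lra.
Qed.

Arguments keyid {R}.
Arguments wid {R}.
Arguments contra {R}.
Arguments Qlow {R}.
Arguments Qup {R}.
Arguments lowalg {R}.

Theorem corollary6p2 (R : realType) (p q x : R) (hp : p < 0)
    (hx : Num.sqrt (- p) < `|x|) :
  let eta0 := x ^+ 3 + p * x + q in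
  exists c : R, 0 < c /\
    forall eta : R,
      c * ((eta - eta0) ^+ 2 * (1 + `|eta|) `^ (- (2%:R / 3%:R))) <= Afun p q x x eta /\
      Afun p q x x eta <= c^-1 * ((eta - eta0) ^+ 2 * (1 + `|eta|) `^ (- (2%:R / 3%:R))).
Proof.
move=> eta0.
have px : - p < x^+2.
  have s0 : 0 <= Num.sqrt (- p) by [].
  have := ltrXn2r 2 s0 hx; rewrite /= sqr_sqrtr ?oppr_ge0 ?ltW // real_normK ?num_real //.
set m := (x^+2 + p)/2%:R.
have m0 : 0 < m by rewrite /m divr_gt0 //; lra.
have mx : 2%:R * m < x^+2 by rewrite /m; lra.
set a := m/2%:R. set b := m/(16%:R*x^+2).
have a0 : 0 < a by rewrite /a divr_gt0.
have b0 : 0 < b by rewrite /b divr_gt0 // mulr_gt0 //; lra.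
set E := 1 + `|eta0|.
have E1 : 1 <= E by rewrite /E; have := normr_ge0 eta0; lra.
set al := 2%:R*x^+2 + m.
have al0 : 0 <= al by rewrite /al; have := sqr_ge0 x; lra.
set C := 1 + 4%:R*E^+2/a^+3 + 4%:R/b.
have a3 : 0 < a^+3 by rewrite exprn_gt0.
have t1 : 0 <= 4%:R*E^+2/a^+3.
  apply: divr_ge0; last exact: ltW.
  by apply: mulr_ge0 => //; exact: sqr_ge0.
have t2 : 0 <= 4%:R/b by rewrite divr_ge0 // ltW.
have C1 : 1 <= C by rewrite /C; lra.
have C3 : C <= C^+3 by nra.
have hC1 : 4%:R * E^+2 <= (a*C)^+3.
  have e : a^+3 * (4%:R*E^+2/a^+3) = 4%:R * E^+2 by rewrite mulrC mulfVK // gt_eqF // exprn_gt0.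
  have h1 : a^+3 * C <= a^+3 * C^+3 by apply: ler_wpM2l => //; exact: ltW.
  have h2 : a^+3 * (4%:R*E^+2/a^+3) <= a^+3 * C by apply: ler_wpM2l; [exact: ltW | rewrite /C; lra].
  rewrite exprMn; lra.
have hC2 : 4%:R <= b * C^+3.
  have e : b * (4%:R/b) = 4%:R by rewrite mulrC mulfVK // gt_eqF.
  have h1 : b * C <= b * C^+3 by apply: ler_wpM2l => //; exact: ltW.
  have h2 : b * (4%:R/b) <= b * C by apply: ler_wpM2l; [exact: ltW | rewrite /C; lra].
  lra.
set s := (1 + 4%:R*al + 2%:R*E^+2)^-1.
set K := 1 + 4%:R*al + 2%:R*E^+2 + 2%:R*C.
have E2 : 0 <= E^+2 by exact: sqr_ge0.
have K0 : 0 < K by rewrite /K; lra.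
have s0 : 0 < s by rewrite /s invr_gt0; lra.
have cs : K^-1 <= s by rewrite /s /K lef_pV2 ?posrE; lra.
exists K^-1; split; first by rewrite invr_gt0.
move=> eta.
set d := eta - eta0.
set X := 1 + `|eta|.
have X0 : 0 < X by rewrite /X; have := normr_ge0 eta; lra.
set w := X `^ (- (2%:R / 3%:R)).
have hw : w^+3 * X^+2 = 1 by exact: wid.
have w0 : 0 <= w by exact: powR_ge0.
have X1 : 1 <= X by rewrite /X; have := normr_ge0 eta; lra.
have w1 : w <= 1.
  rewrite leNgt; apply/negP => H.
  have : 1 < w^+3 by rewrite -(expr1n R 3) ltrXn2r.
  have : 1 <= X^+2 by rewrite -(expr1n R 2) lerXn2r ?nnegrE //; lra.
  nra.
have dw : d^+2 * w^+3 <= E^+2.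
  have tri : `|d| <= E * X.
    have : `|d| <= `|eta| + `|eta0| by rewrite /d ler_normB.
    have := normr_ge0 eta; have := normr_ge0 eta0; rewrite /E /X; nra.
  have : d^+2 <= E^+2 * X^+2.
    rewrite -real_normK ?num_real // -exprMn; apply: lerXn2r => //; rewrite nnegrE //.
    by apply: mulr_ge0; lra.
  have : 0 <= w^+3 by exact: exprn_ge0.
  nra.
have dw0 : 0 <= d^+2 * w by apply: mulr_ge0 => //; exact: sqr_ge0.
set F := eta * x - bfun p q x.
set S := range (fun l : R => eta * l - bfun p q l).
have ub : ubound S (F + C * d^+2 * w).
  move=> _ [l _ <-].
  rewrite (keyid p q x) -/F.
  have := Qlow x m (l - x) m0 mx.
  have := contra a b C d (l - x) w eta eta0 a0 b0 w0 hw (erefl d) hC1 hC2 (le_trans ler01 C1).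
  rewrite -/m -/d -/a -/b; lra.
have hs : has_sup S by split; [exists (eta * 0 - bfun p q 0); exists 0 | exists (F + C * d^+2 * w)].
have bs1 : bstar p q eta <= F + C * d^+2 * w by apply: ge_sup => //; case: hs.
have bs2 : F + (s/2%:R) * (d^+2 * w) <= bstar p q eta.
  have H : S (eta*(x+s*d*w) - bfun p q (x+s*d*w)) by exists (x+s*d*w).
  have := sup_upper_bound hs H; rewrite -[sup S]/(bstar p q eta).
  apply: le_trans.
  rewrite (keyid p q x) -/F.
  have e : x + s*d*w - x = s*d*w by ring.
  rewrite e -/d.
  have := lowalg al E d w s al0 w0 w1 dw (erefl s).
  have := Qup x m (s*d*w).
  rewrite -/m -/al; lra.
have eA : Afun p q x x eta = 2%:R * (bstar p q eta - F) by rewrite /Afun /F; ring.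
rewrite eA; split.
- have : K^-1 * (d^+2 * w) <= s * (d^+2 * w) by apply: ler_wpM2r.
  lra.
- rewrite invrK.
  have : 2%:R * C * (d^+2 * w) <= K * (d^+2 * w).
    apply: ler_wpM2r => //; rewrite /K; lra.
  lra.
Qed.
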